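(* Let $\gamma>0$, $R>0$ and $j\in\mathbb{N}$. Suppose $w\in\mathbb{C}_+$ satisfies $w=G_{j,R}(w)$, where $$G_{j,R}(w):=\frac{-B_j(w)+iA(w)}{2R},\quad A(w):=\log\left|\frac{\mathrm{sq}_-(w^2+i\gamma)-w}{\mathrm{sq}_-(w^2+i\gamma)+w}\right|,\quad B_j(w):=\arg_-\!\left(\frac{\mathrm{sq}_-(w^2+i\gamma)-w}{\mathrm{sq}_-(w^2+i\gamma)+w}\right)+2\pi j,$$ and suppose $w^2+i\gamma\in\mathbb{C}_+$. Then $w^2+i\gamma\in\sigma_d(L_{\gamma,R})$.
   Context: For $\gamma,R>0$, $L_{\gamma,R}=-\frac{d^2}{dx^2}+i\gamma\chi_{[0,R]}$ on $L^2(\mathbb{R}_+)$ with Dirichlet boundary condition at $0$; $\sigma_d$ denotes the set of eigenvalues of finite algebraic multiplicity in $\mathbb{C}\setminus\mathbb{R}_+$. $\arg_-(\zeta)\in[-\pi,\pi)$ and $\mathrm{sq}_-(\zeta)=\sqrt{|\zeta|}e^{\frac i2\arg_-(\zeta)}$ (branch cut along $\mathbb{R}_-$). *)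

(* Defs.v *)
From Stdlib Require Import Reals.
From Coquelicot Require Import Coquelicot.
Open Scope R_scope.

(* arg_-(z) in [-pi, pi): principal argument with branch cut along R_-,
   the negative real axis being assigned the value -pi.  (Value 0 at z = 0.) *)
Definition arg_m (z : C) : R :=
  let x := Re z in let y := Im z in
  match Rlt_dec 0 x with
  | left _ => atan (y / x)
  | right _ =>
    match Rlt_dec x 0 with
    | left _ => match Rlt_dec 0 y with
                | left _ => atan (y / x) + PI
                | right _ => atan (y / x) - PI
                end
    | right _ =>
      match Rlt_dec 0 y with
      | left _ => PI / 2
      | right _ => match Rlt_dec y 0 with
                   | left _ => - (PI / 2)
                   | right _ => 0
                   end
      end
    end
  end.

Definition sq_m (z : C) : C :=
  (sqrt (Cmod z) * cos (arg_m z / 2), sqrt (Cmod z) * sin (arg_m z / 2)).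

Definition iC (g : R) : C := (0, g).

Definition ratio (g : R) (w : C) : C :=
  ((sq_m (w * w + iC g) - w) / (sq_m (w * w + iC g) + w))%C.

Definition A_fun (g : R) (w : C) : R := ln (Cmod (ratio g w)).

Definition B_fun (g : R) (j : nat) (w : C) : R := arg_m (ratio g w) + 2 * PI * INR j.

Definition G_fun (g Rr : R) (j : nat) (w : C) : C :=
  (- B_fun g j w / (2 * Rr), A_fun g w / (2 * Rr)).

Definition pot (g Rr x : R) : C :=
  if Rle_dec x Rr then iC g else 0%C.

(* lam is an eigenvalue of L_{gamma,R} = -d^2/dx^2 + i gamma chi_[0,R] on L^2(R_+)
   with Dirichlet condition at 0: there is a nonzero u in the operator domain
   (H^2(0,oo) with u(0)=0; equivalently u is C^1 on [0,oo), piecewise C^2 off x = R,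
   square integrable) with -u'' + i gamma chi u = lam u. *)
Definition is_eigenvalue (g Rr : R) (lam : C) : Prop :=
  exists u u' : R -> C,
    u 0 = 0%C /\
    filterlim u (at_right 0) (locally (u 0)) /\
    (forall x, 0 < x -> is_derive u x (u' x)) /\
    (forall x, 0 < x -> continuous u' x) /\
    (forall x, 0 < x -> x <> Rr -> is_derive u' x ((pot g Rr x - lam) * u x)%C) /\
    ex_RInt_gen (fun x => Cmod (u x) ^ 2) (at_point 0) (Rbar_locally p_infty) /\
    (exists x, 0 < x /\ u x <> 0%C).

Definition in_sigma_d (g Rr : R) (lam : C) : Prop :=
  ~ (Im lam = 0 /\ 0 <= Re lam) /\ is_eigenvalue g Rr lam.

(* Main.v *)
Require Import Defs.
From Stdlib Require Import Reals Lra.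
From Coquelicot Require Import Coquelicot.
Open Scope R_scope.

Definition cexp (z : C) : C := (exp (Re z) * cos (Im z), exp (Re z) * sin (Im z)).

Lemma cexp_add z1 z2 : cexp (z1 + z2)%C = (cexp z1 * cexp z2)%C.
Proof.
  destruct z1 as [a b], z2 as [c d]; unfold cexp; simpl.
  rewrite exp_plus, cos_plus, sin_plus.
  apply injective_projections; simpl; ring.
Qed.

Lemma cexp_0 : cexp 0%C = 1%C.
Proof.
  unfold cexp; simpl; rewrite exp_0, cos_0, sin_0.
  apply injective_projections; simpl; ring.
Qed.

Lemma Cmod_cexp z : Cmod (cexp z) = exp (Re z).
Proof.
  unfold cexp, Cmod, Re, Im; cbn [fst snd].
  replace ((exp (fst z) * cos (snd z)) ^ 2 + (exp (fst z) * sin (snd z)) ^ 2)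
    with (exp (fst z) ^ 2 * ((sin (snd z))² + (cos (snd z))²)) by (unfold Rsqr; ring).
  rewrite sin2_cos2, Rmult_1_r.
  rewrite sqrt_pow2; auto. left; apply exp_pos.
Qed.

Lemma is_derive_C (f : R -> C) x a b :
  is_derive (fun t => fst (f t)) x a ->
  is_derive (fun t => snd (f t)) x b ->
  is_derive f x (a, b).
Proof.
  intros Ha Hb.
  unfold is_derive in *.
  pose proof (filterdiff_comp'_2 (fun t => fst (f t)) (fun t => snd (f t))
     (fun u v => (u, v) : C) x _ _ (fun u v => (u, v) : C) Ha Hb) as H.
  assert (Hid : filterdiff
       (fun t : prod_NormedModule R_AbsRing R_NormedModule R_NormedModule =>
        ((fst t, snd t) : C)) (locally (fst (f x), snd (f x)))
       (fun t : prod_NormedModule R_AbsRing R_NormedModule R_NormedModule =>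
        ((fst t, snd t) : C))).
  { eapply filterdiff_ext_lin.
    eapply filterdiff_ext. 2: apply filterdiff_id.
    intros [p q]; reflexivity.
    intros [p q]; reflexivity. }
  specialize (H Hid).
  eapply filterdiff_ext_lin.
  eapply filterdiff_ext. 2: exact H.
  intros t; simpl; destruct (f t); reflexivity.
  intros y; reflexivity.
Qed.

Definition E (c z : C) (t : R) : C := (c * cexp (z * RtoC t))%C.

Lemma is_derive_E c z x : is_derive (E c z) x (E (c * z) z x).
Proof.
  replace (E (c * z) z x) with (fst (E (c * z) z x), snd (E (c * z) z x))
    by (destruct (E (c * z) z x); reflexivity).
  destruct c as [c1 c2], z as [z1 z2].
  apply is_derive_C; unfold E, cexp, RtoC; simpl; auto_derive; auto; unfold Rminus; ring.
Qed.

Definition br (c1 z1 c2 z2 : C) (t : R) : C := (E c1 z1 t + E c2 z2 t)%C.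

Lemma is_derive_br c1 z1 c2 z2 x :
  is_derive (br c1 z1 c2 z2) x (br (c1 * z1) z1 (c2 * z2) z2 x).
Proof.
  unfold br.
  exact (is_derive_plus (E c1 z1) (E c2 z2) x _ _ (is_derive_E c1 z1 x) (is_derive_E c2 z2 x)).
Qed.

Definition glue (r : R) (f g : R -> C) (t : R) : C := if Rle_dec t r then f t else g t.

Lemma glue_derive r f g l :
  f r = g r -> is_derive f r l -> is_derive g r l -> is_derive (glue r f g) r l.
Proof.
  intros Heq [Hl Hf] [_ Hg]; split; auto.
  intros x Hx.
  apply (@is_filter_lim_locally_unique R_AbsRing R_NormedModule) in Hx. subst x.
  intros eps.
  assert (Hr : is_filter_lim (locally r) r) by (intros P HP; exact HP).
  specialize (Hf r Hr eps). specialize (Hg r Hr eps).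
  generalize (filter_and _ _ Hf Hg).
  apply filter_imp. intros y [H1 H2].
  unfold glue. destruct (Rle_dec r r) as [_|Hn]; [|lra].
  destruct (Rle_dec y r); auto. rewrite Heq; auto.
Qed.

Lemma glue_cont r f g :
  f r = g r -> continuous f r -> continuous g r -> continuous (glue r f g) r.
Proof.
  intros Heq Hf Hg.
  unfold continuous in *.
  apply filterlim_locally. intros eps.
  apply filterlim_locally with (eps := eps) in Hf.
  apply filterlim_locally with (eps := eps) in Hg.
  generalize (filter_and _ _ Hf Hg).
  apply filter_imp. intros y [H1 H2].
  unfold glue. destruct (Rle_dec r r) as [_|Hn]; [|lra].
  destruct (Rle_dec y r); auto. rewrite Heq; auto.
Qed.

Lemma glue_left r f g x : x < r -> locally x (fun t => f t = glue r f g t).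
Proof.
  intros Hx. assert (Hp : 0 < r - x) by lra.
  exists (mkposreal _ Hp). intros y Hy. unfold glue.
  destruct (Rle_dec y r); auto.
  exfalso. apply Rabs_lt_between' in Hy. simpl in Hy. lra.
Qed.

Lemma glue_right r f g x : r < x -> locally x (fun t => g t = glue r f g t).
Proof.
  intros Hx. assert (Hp : 0 < x - r) by lra.
  exists (mkposreal _ Hp). intros y Hy. unfold glue.
  destruct (Rle_dec y r); auto.
  exfalso. apply Rabs_lt_between' in Hy. simpl in Hy. lra.
Qed.

Lemma sqrt_split x y : x <> 0 -> sqrt (x ^ 2 + y ^ 2) = Rabs x * sqrt (1 + (y / x)²).
Proof.
  intros Hx.
  replace (x ^ 2 + y ^ 2) with (x² * (1 + (y / x)²)) by (unfold Rsqr; field; auto).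
  rewrite sqrt_mult.
  - rewrite sqrt_Rsqr_abs; auto.
  - apply Rle_0_sqr.
  - pose proof (Rle_0_sqr (y / x)); lra.
Qed.

Lemma polar (z : C) : z <> 0%C -> ((Cmod z * cos (arg_m z), Cmod z * sin (arg_m z)) : C) = z.
Proof.
  destruct z as [x y]. intros Hz.
  unfold arg_m, Cmod, Re, Im; cbn [fst snd].
  destruct (Rlt_dec 0 x) as [Hx|Hx].
  - rewrite cos_atan, sin_atan, sqrt_split by lra.
    rewrite Rabs_pos_eq by lra.
    assert (0 < sqrt (1 + (y / x)²)).
    { apply sqrt_lt_R0. pose proof (Rle_0_sqr (y / x)); lra. }
    apply injective_projections; simpl; field; lra.
  - destruct (Rlt_dec x 0) as [Hx'|Hx'].
    + assert (0 < sqrt (1 + (y / x)²)).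
      { apply sqrt_lt_R0. pose proof (Rle_0_sqr (y / x)); lra. }
      assert (Hc : forall t, cos (t - PI) = - cos t).
      { intros t. rewrite cos_minus, cos_PI, sin_PI. ring. }
      assert (Hs : forall t, sin (t - PI) = - sin t).
      { intros t. rewrite sin_minus, cos_PI, sin_PI. ring. }
      rewrite sqrt_split by lra. rewrite Rabs_left by lra.
      destruct (Rlt_dec 0 y).
      * rewrite neg_cos, neg_sin, cos_atan, sin_atan.
        apply injective_projections; simpl; field; lra.
      * rewrite Hc, Hs, cos_atan, sin_atan.
        apply injective_projections; simpl; field; lra.
    + assert (x = 0) by lra. subst x.
      destruct (Rlt_dec 0 y).
      * rewrite cos_PI2, sin_PI2.
        replace (0 ^ 2 + y ^ 2) with (y ^ 2) by ring. rewrite sqrt_pow2 by lra.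
        apply injective_projections; simpl; ring.
      * destruct (Rlt_dec y 0).
        -- rewrite cos_neg, sin_neg, cos_PI2, sin_PI2.
           replace (0 ^ 2 + y ^ 2) with ((- y) ^ 2) by ring. rewrite sqrt_pow2 by lra.
           apply injective_projections; simpl; ring.
        -- exfalso. apply Hz. apply injective_projections; simpl; lra.
Qed.

Lemma sq_m_sq (z : C) : (sq_m z * sq_m z)%C = z.
Proof.
  destruct (Req_EM_T (Cmod z) 0) as [H0|H0].
  - apply Cmod_eq_0 in H0. subst z. unfold sq_m. rewrite Cmod_0, sqrt_0.
    apply injective_projections; simpl; ring.
  - assert (Hz : z <> 0%C) by (intros ->; apply H0; apply Cmod_0).
    rewrite <- (polar z Hz) at 3.
    unfold sq_m.
    set (t := arg_m z / 2).
    replace (arg_m z) with (2 * t) by (unfold t; field).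
    rewrite cos_2a, sin_2a.
    pose proof (Cmod_ge_0 z).
    pose proof (sqrt_sqrt (Cmod z) H) as Hs.
    set (s := sqrt (Cmod z)) in *. rewrite <- Hs.
    apply injective_projections; simpl; ring.
Qed.

Lemma arg_pos (z : C) : 0 < Im z -> 0 < arg_m z < PI.
Proof.
  destruct z as [x y]. unfold Im; cbn [snd]. intros Hy.
  unfold arg_m, Re, Im; cbn [fst snd].
  pose proof PI_RGT_0.
  destruct (Rlt_dec 0 x) as [Hx|Hx].
  - pose proof (atan_bound (y / x)).
    assert (0 < y / x) by (apply Rdiv_lt_0_compat; lra).
    pose proof (atan_increasing 0 (y / x) H1). rewrite atan_0 in H2. lra.
  - destruct (Rlt_dec x 0) as [Hx'|Hx'].
    + destruct (Rlt_dec 0 y); [|lra].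
      pose proof (atan_bound (y / x)).
      assert (y / x < 0).
      { assert (0 < y / - x) by (apply Rdiv_lt_0_compat; lra).
        replace (y / x) with (- (y / - x)) by (field; lra). lra. }
      pose proof (atan_increasing (y / x) 0 H1). rewrite atan_0 in H2. lra.
    + destruct (Rlt_dec 0 y); [|lra]. lra.
Qed.

Lemma sq_m_im (z : C) : 0 < Im z -> 0 < Im (sq_m z).
Proof.
  intros Hz. pose proof (arg_pos z Hz).
  unfold sq_m, Im at 1; cbn [snd].
  apply Rmult_lt_0_compat.
  - apply sqrt_lt_R0. apply Cmod_gt_0. intros ->. simpl in Hz. lra.
  - apply sin_gt_0; lra.
Qed.

Definition Ci : C := (0, 1).

Lemma fixed_E (g Rr : R) (j : nat) (w : C) :
  0 < g -> 0 < Rr -> w = G_fun g Rr j w ->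
  let k := sq_m (w * w + iC g) in
  let P := cexp (Ci * w * RtoC Rr) in
  (P * P * (k - w) = k + w)%C /\ (k + w <> 0)%C /\ (k * k = w * w + iC g)%C.
Proof.
  intros Hg HR H k P.
  pose proof (f_equal fst H) as Hw1. pose proof (f_equal snd H) as Hw2.
  cbn [fst snd G_fun] in Hw1, Hw2. unfold B_fun, A_fun in Hw1, Hw2.
  assert (Hk : (k * k = w * w + iC g)%C) by apply sq_m_sq.
  assert (Hfac : iC g = ((k + w) * (k - w))%C).
  { transitivity (k * k - w * w)%C. { rewrite Hk. ring. } ring. }
  assert (Hg0 : iC g <> 0%C).
  { intros Hc. apply (f_equal snd) in Hc. simpl in Hc. lra. }
  assert (Hp : (k + w <> 0)%C).
  { intros Hc. apply Hg0. rewrite Hfac, Hc. ring. }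
  assert (Hm : (k - w <> 0)%C).
  { intros Hc. apply Hg0. rewrite Hfac, Hc. ring. }
  assert (Hr : ratio g w = ((k - w) / (k + w))%C) by reflexivity.
  rewrite Hr in Hw1, Hw2.
  set (r := ((k - w) / (k + w))%C) in *.
  assert (Hr0 : r <> 0%C).
  { intros Hc. apply Hm. replace (k - w)%C with (r * (k + w))%C by (unfold r; field; auto).
    rewrite Hc. ring. }
  pose proof (polar r Hr0) as Hpol.
  pose proof (proj1 (Cmod_gt_0 r) Hr0) as Hrho.
  set (rho := Cmod r) in *. set (th := arg_m r) in *.
  assert (HPP : (P * P)%C = ((/ rho * cos th)%R, (- (/ rho * sin th))%R)).
  { unfold P. rewrite <- cexp_add. unfold cexp.
    assert (Hre : Re (Ci * w * RtoC Rr + Ci * w * RtoC Rr)%C = - ln rho).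
    { unfold Re, Ci, Cplus, Cmult, RtoC; cbn [fst snd]. rewrite Hw2. field. lra. }
    assert (Him : Im (Ci * w * RtoC Rr + Ci * w * RtoC Rr)%C = - (th + 2 * INR j * PI)).
    { unfold Im, Ci, Cplus, Cmult, RtoC; cbn [fst snd]. rewrite Hw1. field. lra. }
    rewrite Hre, Him, exp_Ropp, exp_ln, cos_neg, sin_neg, cos_period, sin_period by lra.
    apply injective_projections; simpl; ring. }
  split; [|split; auto].
  assert (HPr : (P * P * r = 1)%C).
  { rewrite HPP. rewrite <- Hpol.
    pose proof (sin2_cos2 th) as Hsc. unfold Rsqr in Hsc.
    apply injective_projections; simpl.
    - rewrite <- Hsc. field. lra.
    - field. lra. }
  replace (k - w)%C with (r * (k + w))%C by (unfold r; field; auto).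
  rewrite Cmult_assoc, HPr. ring.
Qed.
Lemma lim_exp_neg (a c : R) : 0 < c -> filterlim (fun x => a * exp (- c * x)) (Rbar_locally p_infty) (locally 0).
Proof.
  intros Hc.
  assert (H1 : is_lim (fun x => - c * x) p_infty m_infty).
  { apply is_lim_ext with (fun x => - (c * x)). intros; ring.
    replace m_infty with (Rbar_opp (Rbar_mult c p_infty)).
    apply is_lim_opp, is_lim_scal_l, is_lim_id.
    simpl. unfold Rbar_mult'. destruct (Rle_dec 0 c); [|lra].
    destruct (Rle_lt_or_eq_dec 0 c r); [reflexivity|lra]. }
  assert (H2 : is_lim (fun x => exp (- c * x)) p_infty 0).
  { apply (is_lim_comp exp (fun x => - c * x) p_infty 0 m_infty is_lim_exp_m H1).
    exists 0. intros; discriminate. }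
  pose proof (is_lim_scal_l _ a _ _ H2) as H3.
  simpl in H3. rewrite Rmult_0_r in H3. exact H3.
Qed.

Lemma br_scale a b c1 c2 m z1 z2 x :
  a = (m * c1)%C -> b = (m * c2)%C -> br a z1 b z2 x = (m * br c1 z1 c2 z2 x)%C.
Proof. intros -> ->. unfold br, E. ring. Qed.

Lemma mul_RtoC0 (z : C) : (z * RtoC 0)%C = 0%C.
Proof. apply injective_projections; simpl; ring. Qed.

Lemma Ci2 : (Ci * Ci)%C = (-1)%C.
Proof. apply injective_projections; simpl; ring. Qed.

Lemma re_Ci (z : C) (x : R) : Re (Ci * z * RtoC x)%C = - Im z * x.
Proof. unfold Re, Im; simpl. ring. Qed.

Lemma match_lemma (A B w k : C) :
  (B * A = 1)%C -> (A * A * (k - w) = k + w)%C ->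
  (Ci * w * (A + B) = Ci * k * (A - B))%C.
Proof.
  intros H1 H2.
  assert (Heq : (k * (A * A) - k = w * (A * A) + w)%C).
  { transitivity (A * A * (k - w) + w * (A * A) - k)%C. ring. rewrite H2. ring. }
  transitivity (B * A * (Ci * w * (A + B)))%C. { rewrite H1. ring. }
  transitivity (B * Ci * (w * (A * A) + w * (B * A)))%C. { ring. }
  assert (Heq' : (w * (A * A) + w * (B * A) = k * (A * A) - k * (B * A))%C).
  { rewrite H1. transitivity (w * (A * A) + w)%C. ring. rewrite <- Heq. ring. }
  rewrite Heq'.
  transitivity (Ci * k * ((B * A) * A - B * (B * A)))%C. ring.
  rewrite H1. ring.
Qed.

Theorem lemma2p2 (gamma Rr : R) (j : nat) (w : C) :
  0 < gamma -> 0 < Rr ->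
  0 < Im w ->
  w = G_fun gamma Rr j w ->
  0 < Im (w * w + iC gamma)%C ->
  in_sigma_d gamma Rr (w * w + iC gamma)%C.
Proof.
  intros Hg HR Hw Hfix Hlam.
  split. { intros [H0 _]. lra. }
  destruct (fixed_E gamma Rr j w Hg HR Hfix) as [HE [Hp Hk]].
  set (lam := (w * w + iC gamma)%C) in *.
  set (k := sq_m lam) in *.
  pose proof (sq_m_im lam Hlam) as Hkb. fold k in Hkb.
  set (P := cexp (Ci * w * RtoC Rr)) in *.
  set (z := (Ci * w)%C).
  set (f := br 1 z (-1) (- z)).
  set (c0 := (f Rr * cexp (- (Ci * k) * RtoC Rr))%C).
  set (g := br c0 (Ci * k) 0 0).
  set (f' := br (1 * z) z (-1 * - z) (- z)).
  set (g' := br (c0 * (Ci * k)) (Ci * k) (0 * 0) 0).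
  set (f'' := br (1 * z * z) z (-1 * - z * - z) (- z)).
  set (g'' := br (c0 * (Ci * k) * (Ci * k)) (Ci * k) (0 * 0 * 0) 0).
  set (u := glue Rr f g). set (u' := glue Rr f' g').
  assert (Df : forall x, is_derive f x (f' x)) by (intros; apply is_derive_br).
  assert (Dg : forall x, is_derive g x (g' x)) by (intros; apply is_derive_br).
  assert (Df' : forall x, is_derive f' x (f'' x)) by (intros; apply is_derive_br).
  assert (Dg' : forall x, is_derive g' x (g'' x)) by (intros; apply is_derive_br).
  assert (Hc : (cexp (- (Ci * k) * RtoC Rr) * cexp (Ci * k * RtoC Rr) = 1)%C).
  { rewrite <- cexp_add. replace (- (Ci * k) * RtoC Rr + Ci * k * RtoC Rr)%C with (RtoC 0) by ring.
    apply cexp_0. }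
  assert (Hfg : f Rr = g Rr).
  { unfold g, br, E. rewrite <- (Cmult_1_r (f Rr)) at 1. rewrite <- Hc. unfold c0. ring. }
  set (B := cexp (- z * RtoC Rr)).
  assert (HBP : (B * P = 1)%C).
  { unfold B, P. rewrite <- cexp_add. fold z.
    replace (- z * RtoC Rr + z * RtoC Rr)%C with (RtoC 0) by ring. apply cexp_0. }
  assert (HfPB : f Rr = (P - B)%C).
  { unfold f, br, E, P, B. fold z. ring. }
  assert (Hfg' : f' Rr = g' Rr).
  { assert (H1 : f' Rr = (z * (P + B))%C).
    { unfold f', br, E, P, B. fold z. ring. }
    assert (H2 : g' Rr = (Ci * k * g Rr)%C).
    { unfold g'. apply br_scale; ring. }
    rewrite H1, H2, <- Hfg, HfPB. unfold z.
    apply match_lemma; auto. }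
  assert (Du : forall x, is_derive u x (u' x)).
  { intros x. destruct (Rtotal_order x Rr) as [Hx|[Hx|Hx]].
    - apply (is_derive_ext_loc f). apply glue_left; auto.
      unfold u', glue. destruct (Rle_dec x Rr); [|lra]. auto.
    - subst x. replace (u' Rr) with (f' Rr) by (unfold u', glue; destruct (Rle_dec Rr Rr); [auto|lra]).
      apply glue_derive; auto. rewrite Hfg'. auto.
    - apply (is_derive_ext_loc g). apply glue_right; auto.
      unfold u', glue. destruct (Rle_dec x Rr); [lra|]. auto. }
  assert (Hcf : forall x, continuous f' x)
    by (intros x; exact (@ex_derive_continuous R_AbsRing C_R_NormedModule f' x (ex_intro _ _ (Df' x)))).
  assert (Hcg : forall x, continuous g' x)
    by (intros x; exact (@ex_derive_continuous R_AbsRing C_R_NormedModule g' x (ex_intro _ _ (Dg' x)))).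
  assert (Du' : forall x, x <> Rr -> is_derive u' x ((pot gamma Rr x - lam) * u x)%C).
  { intros x Hx. destruct (Rtotal_order x Rr) as [Hx'|[Hx'|Hx']]; [|lra|].
    - apply (is_derive_ext_loc f'). apply glue_left; auto.
      replace ((pot gamma Rr x - lam) * u x)%C with (f'' x).
      apply Df'.
      unfold pot, u, glue. destruct (Rle_dec x Rr); [|lra].
      unfold f'', f. apply br_scale; unfold z, lam, Ci, iC;
        apply injective_projections; simpl; ring.
    - apply (is_derive_ext_loc g'). apply glue_right; auto.
      replace ((pot gamma Rr x - lam) * u x)%C with (g'' x).
      apply Dg'.
      unfold pot, u, glue. destruct (Rle_dec x Rr); [lra|].
      unfold g'', g. apply br_scale.
      + transitivity (c0 * (Ci * Ci) * (k * k))%C. ring. rewrite Ci2, Hk. ring.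
      + ring. }
  exists u, u'.
  split; [|split; [|split; [|split; [|split; [|split]]]]].
  - unfold u, glue. destruct (Rle_dec 0 Rr); [|lra].
    unfold f, br, E. rewrite !mul_RtoC0, cexp_0. ring.
  - eapply filterlim_filter_le_1; [apply filter_le_within|].
    exact (@ex_derive_continuous R_AbsRing C_R_NormedModule u 0 (ex_intro _ _ (Du 0))).
  - intros x _. apply Du.
  - intros x _. destruct (Rtotal_order x Rr) as [Hx'|[Hx'|Hx']].
    + refine (@ex_derive_continuous R_AbsRing C_R_NormedModule u' x (ex_intro _ _ (Du' x _))). lra.
    + subst x. apply glue_cont; auto.
    + refine (@ex_derive_continuous R_AbsRing C_R_NormedModule u' x (ex_intro _ _ (Du' x _))). lra.
  - intros x _ Hx. apply Du'; auto.
  - set (kb := Im k).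
    assert (Hkb' : 0 < kb) by exact Hkb.
    set (a := Cmod c0 ^ 2).
    set (F := fun x => - a / (2 * kb) * exp (- (2 * kb) * x)).
    assert (HDF : forall x, Derive F x = a * exp (- (2 * kb) * x)).
    { intros x. apply is_derive_unique. unfold F. auto_derive; auto. field. lra. }
    assert (Htail : forall x, Rr < x -> Cmod (u x) ^ 2 = a * exp (- (2 * kb) * x)).
    { intros x Hx. unfold u, glue. destruct (Rle_dec x Rr); [lra|].
      unfold g, br, E.
      replace (c0 * cexp (Ci * k * RtoC x) + 0 * cexp (0 * RtoC x))%C
        with (c0 * cexp (Ci * k * RtoC x))%C by ring.
      rewrite Cmod_mult, Cmod_cexp, re_Ci. unfold a. fold kb.
      replace (- (2 * kb) * x) with ((- kb * x) + (- kb * x)) by ring.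
      rewrite exp_plus. ring. }
    apply ex_RInt_gen_Chasles with Rr.
    + apply (proj2 (@ex_RInt_gen_at_point R_CompleteNormedModule _ _ _)).
      apply ex_RInt_ext with (fun x => fst (f x) ^ 2 + snd (f x) ^ 2).
      { intros x Hx. rewrite Rmin_left, Rmax_right in Hx by lra.
        unfold u, glue. destruct (Rle_dec x Rr); [|lra]. rewrite Cmod2_alt. reflexivity. }
      apply (@ex_RInt_continuous R_CompleteNormedModule). intros x _. apply (@ex_derive_continuous R_AbsRing R_NormedModule).
      unfold f, br, E, cexp, z, Ci, RtoC; simpl. auto_derive. auto.
    + exists (0 - F Rr).
      apply is_RInt_gen_ext with (Derive F).
      { apply Filter_prod with (fun a => a = Rr) (fun b => Rr < b).
        - reflexivity.
        - exists Rr; auto.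
        - intros a0 b Ha Hb x Hx. simpl in Hx. subst a0.
          rewrite Rmin_left, Rmax_right in Hx by lra. rewrite HDF, Htail; auto; lra. }
      apply is_RInt_gen_Derive.
      * apply Filter_prod with (fun _ => True) (fun _ => True); [exact I| apply filter_true|].
        intros; unfold F; auto_derive; auto.
      * apply Filter_prod with (fun _ => True) (fun _ => True); [exact I| apply filter_true|].
        intros. apply continuous_ext with (fun x => a * exp (- (2 * kb) * x)).
        { intros; symmetry; apply HDF. }
        apply (@ex_derive_continuous R_AbsRing R_NormedModule); auto_derive; auto.
      * intros P0 HP0. exact (locally_singleton _ _ HP0).
      * apply lim_exp_neg. lra.
  - exists Rr. split; auto.
    unfold u, glue. destruct (Rle_dec Rr Rr); [|lra].
    rewrite HfPB. intros H0.
    assert (HPB : P = B).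
    { transitivity ((P - B) + B)%C. ring. rewrite H0. ring. }
    apply (f_equal Cmod) in HPB. unfold P, B in HPB.
    rewrite !Cmod_cexp in HPB. apply exp_inv in HPB.
    unfold z, Re, Im, Ci in HPB; simpl in HPB.
    unfold Im in Hw. nra.
Qed.
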